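(* Let $a,b,k$ be positive integers. If the player cannot win the $(a,b)$-game, then the player cannot win the $(a,bk)$-game.
   Context: The $(n,m)$-game: $n$ counters at positions $1,\dots,n$ (vertices in cyclic order of a regular $n$-gon table), each showing an element of $\mathbb{Z}_m$; a configuration is a vector in $\mathbb{Z}_m^n$, initially arbitrary and unknown. Each turn the player chooses a move $y\in\mathbb{Z}_m^n$ added coordinatewise, then the table is rotated by an adversarially chosen $k\in\mathbb{Z}_n$, replacing $x$ by $x'$ with $x'_{i+k}=x_i$ (indices mod $n$). The player wins if at some moment (including initially) all counters show $0$. A strategy is a finite sequence of moves; it is winning if it forces the zero configuration at some time for every initial configuration and every choice of rotations. ''The player can win'' means a winning finite sequence exists. *)

(* Defs.v *)
From mathcomp Require Import all_boot.
Set Implicit Arguments. Unset Strict Implicit. Unset Printing Implicit Defensive.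

(* Z_m is represented by 'I_m (m > 0 is implied by inhabitation) with
   addition modulo m; positions 1..n are represented by 'I_n (0-based),
   and Z_n acts on them by addition modulo n. *)

Lemma ord_pos (m : nat) (a : 'I_m) : 0 < m.
Proof. exact: leq_ltn_trans (leq0n a) (ltn_ord a). Qed.

Definition addZ (m : nat) (a b : 'I_m) : 'I_m :=
  Ordinal (ltn_pmod (a + b) (ord_pos a)).

Definition subZ (n : nat) (i k : 'I_n) : 'I_n :=
  Ordinal (ltn_pmod (i + (n - k)) (ord_pos i)).

Definition config (n m : nat) := 'I_n -> 'I_m.

Definition addc n m (x y : config n m) : config n m := fun i => addZ (x i) (y i).

(* rotation by k : x' with x'_{i+k} = x_i, i.e. x'_j = x_{j-k} *)
Definition rotc n m (k : 'I_n) (x : config n m) : config n m :=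
  fun j => x (subZ j k).

Definition is_zero n m (x : config n m) : Prop := forall i, val (x i) = 0.

(* [hits x s ks t]: starting from configuration x at turn t, playing the
   moves s in order, with the adversary rotating by ks t, ks (t+1), ...,
   the zero configuration occurs at some moment (including now). *)
Fixpoint hits n m (x : config n m) (s : seq (config n m)) (ks : nat -> 'I_n)
  (t : nat) : Prop :=
  is_zero x \/
  match s with
  | [::] => False
  | y :: s' => hits (rotc (ks t) (addc x y)) s' ks t.+1
  end.

Definition winning n m (s : seq (config n m)) : Prop :=
  forall (x : config n m) (ks : nat -> 'I_n), hits x s ks 0.

Definition can_win (n m : nat) : Prop := exists s : seq (config n m), winning s.

(* Main.v *)
Require Import Defs.
From mathcomp Require Import all_boot.

Section P.
Variables (a b k : nat) (hb : 0 < b).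

Definition projZ (v : 'I_(b * k)) : 'I_b := Ordinal (ltn_pmod v hb).
Definition projc (x : config a (b * k)) : config a b := fun i => projZ (x i).

Lemma hits_proj (s : seq (config a (b * k))) ks : forall t x (x' : config a b),
  (forall i, x' i = projZ (x i)) -> hits x s ks t -> hits x' (map projc s) ks t.
Proof.
elim: s => [|y s IH] t x x' Hx /=.
- case=> // Hz; left => i; rewrite Hx /= Hz mod0n //.
- case=> [Hz|H]; [left => i; rewrite Hx /= Hz mod0n // | right].
  apply: (IH _ _ _ _ H) => i; apply: val_inj.
  rewrite /rotc /addc /= Hx /= modn_dvdm ?dvdn_mulr // modnDm //.
Qed.
End P.

Theorem lemma3p2 (a b k : nat) :
  0 < a -> 0 < b -> 0 < k -> ~ can_win a b -> ~ can_win a (b * k).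
Proof.
move=> ha hb hk nw [s Hs]; apply: nw; exists (map (@projc a b k hb) s) => x ks.
have lt i : x i < b * k.
  by apply: leq_trans (ltn_ord (x i)) _; rewrite leq_pmulr.
apply: (@hits_proj a b k hb s ks 0 (fun i => Ordinal (lt i))); last exact: Hs.
by move=> i; apply: val_inj; rewrite /= modn_small.
Qed.
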